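(* Let $A$ be a commutative ring. The graph $\Gamma(A)$ contains $4$-cliques if and only if the set $\{u\in A^\times\mid 1-u\in A^\times\}$ is non-empty.
   Context: A unimodular row over $A$ is $(a,b)\in A^2$ with $aA+bA=A$. $\Gamma(A)$ is the graph whose vertices are classes of unimodular rows modulo multiplication by units, with $\{[u],[v]\}$ an edge iff the matrix with rows $u,v$ lies in $\mathrm{GL}_2(A)$. A $4$-clique is a set of four distinct pairwise adjacent vertices. *)

(* Defs.v *)
From HB Require Import structures.
From mathcomp Require Import all_boot all_order all_algebra.
Set Implicit Arguments. Unset Strict Implicit. Unset Printing Implicit Defensive.
Import GRing.Theory.
Local Open Scope ring_scope.

Definition is_unit (A : comNzRingType) (a : A) : Prop := exists b : A, a * b = 1.

Definition unimodular (A : comNzRingType) (u : 'rV[A]_2) : Prop :=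
  exists x y : A, u 0 0 * x + u 0 1 * y = 1.

(* Two rows define the same vertex of Gamma(A): equal up to multiplication by a unit. *)
Definition same_class (A : comNzRingType) (u v : 'rV[A]_2) : Prop :=
  exists c : A, is_unit c /\ v = c *: u.

Definition mx_rows (A : comNzRingType) (u v : 'rV[A]_2) : 'M[A]_2 :=
  \matrix_(i < 2, j < 2) (if i == 0 then u 0 j else v 0 j).

Definition inGL2 (A : comNzRingType) (M : 'M[A]_2) : Prop :=
  exists N : 'M[A]_2, M *m N = 1%:M /\ N *m M = 1%:M.

(* Edge relation of Gamma(A), on representatives (independent of the representatives). *)
Definition adjacent (A : comNzRingType) (u v : 'rV[A]_2) : Prop :=
  inGL2 (mx_rows u v).

Definition has_4clique (A : comNzRingType) : Prop :=
  exists f : 'I_4 -> 'rV[A]_2,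
    (forall i, unimodular (f i)) /\
    (forall i j, i != j -> ~ same_class (f i) (f j) /\ adjacent (f i) (f j)).

(* Main.v *)
Require Import Defs.
From mathcomp Require Import all_boot all_order all_algebra.
From mathcomp Require Import ring.
Local Open Scope ring_scope.
Import GRing.Theory.
Set Implicit Arguments. Unset Strict Implicit.

Definition D2 (A : comNzRingType) (x y : 'rV[A]_2) : A := x 0 0 * y 0 1 - x 0 1 * y 0 0.

Lemma det_rows (A : comNzRingType) (x y : 'rV[A]_2) : \det (mx_rows x y) = D2 x y.
Proof.
rewrite (expand_det_row _ ord0) !big_ord_recl big_ord0 /cofactor !det_mx11 /D2.
rewrite !mxE /=.
have -> : (bump 0 0 : nat) = 1%N by [].
rewrite /bump /=.
rewrite !expr0 !expr1 ?mulN1r ?mul1r.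
set a := x 0 0. set b := x 0 1.
have L1 : (lift (ord0 : 'I_2) (0 : 'I_1) : 'I_2) = 1 by apply/val_inj.
have L2 : (lift (ord0 : 'I_2) (ord0 : 'I_1) : 'I_2) = 1 by apply/val_inj.
have L3 : (lift (lift (ord0 : 'I_2) (ord0 : 'I_1)) (0 : 'I_1) : 'I_2) = 0 by apply/val_inj.
rewrite L3 ?L1 ?L2 /a /b; ring.
Qed.

Lemma adj_unit (A : comNzRingType) (x y : 'rV[A]_2) : adjacent x y -> is_unit (D2 x y).
Proof.
move=> [N [H1 _]]; exists (\det N).
by rewrite -det_rows -det_mulmx H1 det1.
Qed.

Lemma key (A : comNzRingType) (a01 a02 a03 a12 a13 a23 i01 i02 i03 i12 i13 i23 : A) :
  a01*i01 = 1 -> a02*i02 = 1 -> a03*i03 = 1 -> a12*i12 = 1 -> a13*i13 = 1 -> a23*i23 = 1 ->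
  a01*a23 - a02*a13 + a03*a12 = 0 ->
  exists u : A, is_unit u /\ is_unit (1 - u).
Proof.
move=> h01 h02 h03 h12 h13 h23 P.
exists (a01*a23*i02*i13); split.
  exists (a02*a13*i01*i23).
  transitivity ((a01*i01)*(a23*i23)*((a02*i02)*(a13*i13))); first by ring.
  by rewrite h01 h02 h13 h23; ring.
have E : a01*a23 = a02*a13 - a03*a12.
  by apply/eqP; rewrite -subr_eq0; apply/eqP; rewrite -P; ring.
exists (a02*a13*i03*i12); rewrite E.
transitivity ((1 - (a02*i02)*(a13*i13))*(a02*a13*i03*i12)
   + (a03*i03)*(a12*i12)*(a02*i02)*(a13*i13)); first by ring.
by rewrite h02 h13 h03 h12; ring.
Qed.

Lemma adj_not_same (A : comNzRingType) (x y : 'rV[A]_2) : adjacent x y -> ~ same_class x y.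
Proof.
move=> /adj_unit [b Hb] [c [_ E]]; subst y.
have : D2 x (c *: x) = 0 by rewrite /D2 !mxE; ring.
move=> H; move: Hb; rewrite H mul0r => /eqP; rewrite eq_sym oner_eq0 //.
Qed.

Theorem lemma2p9 (A : comNzRingType) :
  has_4clique A <-> exists u : A, is_unit u /\ is_unit (1 - u).
Proof.
split.
  move=> [f [_ Hf]].
  have U : forall i j : 'I_4, i != j -> is_unit (D2 (f i) (f j)).
    by move=> i j ij; apply: adj_unit; case: (Hf i j ij).
  have [i01 h01] := U 0 1 isT.
  have [i02 h02] := U 0 2 isT.
  have [i03 h03] := U 0 3 isT.
  have [i12 h12] := U 1 2 isT.
  have [i13 h13] := U 1 3 isT.
  have [i23 h23] := U 2 3 isT.
  apply: (key h01 h02 h03 h12 h13 h23).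
  by rewrite /D2; ring.
move=> [u [[v hv] [w hw]]].
pose g (i : 'I_4) : 'rV[A]_2 :=
  match val i with
  | 0 => \row_j (if j == 0 then 1 else 0)
  | 1 => \row_j (if j == 0 then 0 else 1)
  | 2 => \row_j 1
  | _ => \row_j (if j == 0 then 1 else u)
  end.
have adjD : forall x y : 'rV[A]_2, is_unit (D2 x y) -> adjacent x y.
  move=> x y [b hb].
  exists (b *: \adj (mx_rows x y)); split.
    by rewrite -scalemxAr mul_mx_adj det_rows scale_scalar_mx mulrC hb.
  by rewrite -scalemxAl mul_adj_mx det_rows scale_scalar_mx mulrC hb.
have AD : forall i j : 'I_4, i != j -> adjacent (g i) (g j).
  move=> i j ij; apply: adjD.
  case: i ij => [[|[|[|[|i]]]] Hi] //; case: j => [[|[|[|[|j]]]] Hj] // _;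
  rewrite /g /D2 /= !mxE /=.
  all: first [ by exists 1; ring | by exists (-1); ring | by exists v; ring
             | by exists (- v); ring | by exists w; ring | by exists (- w); ring
             | idtac ].
  1: by exists v; rewrite -[RHS]hv; ring.
  1: by exists (-w); rewrite -[RHS]hw; ring.
  1: by exists (-v); rewrite -[RHS]hv; ring.
  1: by exists w; rewrite -[RHS]hw; ring.
exists g; split.
  move=> i; case: i => [[|[|[|[|i]]]] Hi] //; rewrite /unimodular /g /= !mxE /=.
  - by exists 1, 0; ring.
  - by exists 0, 1; ring.
  - by exists 1, 0; ring.
  - by exists 1, 0; ring.
move=> i j ij; split; last exact: AD.
exact: adj_not_same (AD i j ij).
Qed.
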